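(* Let $G$ be a graph with at least one edge and let $x$ be a non-isolated vertex of $G$. Then there exists a Grundy total dominating sequence of $G$ that contains $x$.
   Context: For a graph $G$, $N(v)$ denotes the open neighborhood of $v$. A sequence $(v_1,\ldots,v_k)$ of distinct vertices is an open neighborhood sequence if $N(v_i)\setminus\bigcup_{j=1}^{i-1}N(v_j)\neq\emptyset$ for each $i\in[k]$. A Grundy total dominating sequence is an open neighborhood sequence of maximum possible length in $G$. *)

(* Defs.v *)
From mathcomp Require Import all_boot.
Set Implicit Arguments. Unset Strict Implicit. Unset Printing Implicit Defensive.

Definition simple_graph (T : finType) (e : rel T) : Prop :=
  symmetric e /\ irreflexive e.

Definition nbhd (T : finType) (e : rel T) (v : T) : {set T} := [set u | e v u].

Definition ons (T : finType) (e : rel T) (s : seq T) : Prop :=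
  uniq s /\
  forall i : 'I_(size s),
    nbhd e (tnth (in_tuple s) i)
      :\: \bigcup_(j < size s | j < i) nbhd e (tnth (in_tuple s) j) != set0.

Definition grundy_tds (T : finType) (e : rel T) (s : seq T) : Prop :=
  ons e s /\ forall t : seq T, ons e t -> size t <= size s.

(* Main.v *)
Require Import Defs.
From mathcomp Require Import all_boot.
From Stdlib Require Import Classical.
From mathcomp Require Import zify.

Section S.
Variables (T : finType) (e : rel T) (x : T).

Definition ons' (s : seq T) : Prop := uniq s /\ forall i, i < size s ->
  exists w, e (nth x s i) w /\ forall j, j < i -> ~~ e (nth x s j) w.

Lemma onsP s : ons e s <-> ons' s.
Proof.
split.
- case=> u H; split=> // i Hi.
  have /set0Pn [w] := H (Ordinal Hi).
  rewrite in_setD inE (tnth_nth x) /= => /andP [Hn Hw].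
  exists w; split=> // j Hj; apply/negP => Hjw; move/negP: Hn; apply.
  have Hjs : j < size s by apply: ltn_trans Hj Hi.
  apply/bigcupP; exists (Ordinal Hjs) => //.
  by rewrite inE (tnth_nth x).
- case=> u H; split=> // i.
  have [w [Hw Hj]] := H i (ltn_ord i).
  apply/set0Pn; exists w.
  rewrite in_setD inE (tnth_nth x) /= Hw andbT.
  apply/bigcupP => -[j Hji]; rewrite inE (tnth_nth x) /=.
  by move/negP: (Hj j Hji).
Qed.

Lemma ons_size {s} : ons' s -> size s <= #|T|.
Proof. by case=> u _; rewrite -(card_uniqP u) max_card. Qed.

Lemma exists_grundy : exists s, grundy_tds e s.
Proof.
suff H : forall n t, ons' t -> #|T| - size t <= n -> exists s, grundy_tds e s.
  apply: (H #|T| [::]) => //; last by rewrite leq_subr.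
elim=> [|n IH] t Ht Hn.
- exists t; split; first by apply/onsP.
  move=> t' /onsP /ons_size Ht'. move: Hn Ht'. lia.
- destruct (classic (forall t' : seq T, ons e t' -> size t' <= size t)) as [Hm|Hm].
  + by exists t; split => //; apply/onsP.
  + apply: NNPP => Hc; apply: Hm => t' /onsP Ht'.
    rewrite leqNgt; apply/negP => Hlt; apply: Hc.
    apply: (IH t' Ht').
    have := ons_size Ht'. move: Hn Hlt. lia.
Qed.

Definition P (s : seq T) m :=
  [forall w, e x w ==> has (fun j => e (nth x s j) w) (iota 0 m)].

Lemma hasI (s : seq T) m w :
  has (fun j => e (nth x s j) w) (iota 0 m) <-> exists2 j, j < m & e (nth x s j) w.
Proof.
split.
- by case/hasP => j; rewrite mem_iota add0n => /andP [_ Hj] H; exists j.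
- by case=> j Hj H; apply/hasP; exists j => //; rewrite mem_iota add0n.
Qed.

Lemma main (s : seq T) : grundy_tds e s -> x \notin s -> (exists y, e x y) ->
  exists t, grundy_tds e t /\ x \in t.
Proof.
case=> /onsP [us Hs] Hmax xs [y xy].
have Ps : P s (size s).
  apply: NNPP => HP.
  have [w /andP [xw Hw]] : exists w, e x w && ~~ has (fun j => e (nth x s j) w) (iota 0 (size s)).
    apply: NNPP => Hn; apply: HP; apply/forallP => w; apply/implyP => xw.
    apply: NNPP => Hh; apply: Hn; exists w; by rewrite xw; apply/negP.
  have : ons' (rcons s x).
    split; first by rewrite rcons_uniq xs.
    move=> i; rewrite size_rcons ltnS leq_eqVlt => /orP [/eqP -> | Hi].
    + exists w; rewrite nth_rcons ltnn eqxx; split=> // j Hj.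
      rewrite nth_rcons Hj; apply/negP => Hjw; move/negP: Hw; apply.
      by apply/hasI; exists j.
    + have [w' [H1 H2]] := Hs i Hi; exists w'; rewrite nth_rcons Hi; split=> // j Hj.
      by rewrite nth_rcons (ltn_trans Hj Hi); apply: H2.
  move/onsP/Hmax; rewrite size_rcons ltnn //.
have exP : exists m, P s m by exists (size s).
case: (ex_minnP exP) => m Pm Hmin.
have Hm0 : 0 < m.
  rewrite lt0n; apply/negP => /eqP Hm; move: Pm; rewrite Hm.
  by move/forallP/(_ y); rewrite xy.
set k := m.-1.
have Hkm : m = k.+1 by rewrite /k prednK.
have ks : k < size s by move: (Hmin _ Ps); rewrite Hkm.
have nPk : ~~ P s k.
  apply/negP => Pk; have := Hmin _ Pk; rewrite Hkm ltnn //.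
have [w0 [xw0 Hw0]] : exists w, e x w /\ forall j, j < k -> ~~ e (nth x s j) w.
  apply: NNPP => Hn; move/negP: nPk; apply; apply/forallP => w; apply/implyP => xw.
  apply: NNPP => Hh; apply: Hn; exists w; split=> // j Hj; apply/negP => Hjw.
  by apply: Hh; apply/hasI; exists j.
set t := set_nth x s k x.
have st : size t = size s by rewrite /t size_set_nth; apply/maxn_idPr.
have nt : forall j, nth x t j = if j == k then x else nth x s j.
  by move=> j; rewrite /t nth_set_nth.
have ot : ons' t.
  split.
  - apply/(uniqP x) => i j; rewrite !inE st => Hi Hj; rewrite !nt.
    case: (eqVneq i k) => [->|ik]; case: (eqVneq j k) => [->|jk] //.
    + by move=> H; move: xs; rewrite H mem_nth.
    + by move=> H; move: xs; rewrite -H mem_nth.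
    + by move/(uniqP x us); apply; rewrite inE.
  - move=> i; rewrite st => Hi.
    case: (ltngtP i k) => [ik|ki|->].
    + have [w [H1 H2]] := Hs i Hi; exists w; rewrite nt (ltn_eqF ik); split=> // j Hj.
      by rewrite nt (ltn_eqF (ltn_trans Hj ik)); apply: H2.
    + have [w [H1 H2]] := Hs i Hi; exists w; rewrite nt (gtn_eqF ki); split=> // j Hj.
      rewrite nt; case: (eqVneq j k) => [_|jk]; last by apply: H2.
      apply/negP => xw; move/forallP/(_ w): Pm; rewrite xw /= => /hasI [j' Hj' H'].
      have Hj'i : j' < i by apply: leq_trans ki; rewrite -ltnS -Hkm.
      by move/negP: (H2 j' Hj'i).
    + exists w0; rewrite nt eqxx; split=> // j Hj.
      by rewrite nt (ltn_eqF Hj); apply: Hw0.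
exists t; split.
- by split; [apply/onsP | move=> t' /Hmax; rewrite st].
- have <- : nth x t k = x by rewrite nt eqxx.
  by apply: mem_nth; rewrite st.
Qed.
End S.

Theorem proposition5p1 (T : finType) (e : rel T) (x : T) :
  simple_graph e ->
  (exists u v : T, e u v) ->
  (exists y : T, e x y) ->
  exists s : seq T, grundy_tds e s /\ x \in s.
Proof.
move=> _ _ Hy.
have [s Hs] := @exists_grundy T e x.
case: (boolP (x \in s)) => xs; first by exists s.
exact: main Hs xs Hy.
Qed.
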